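(* Let $P=\{S_1,\ldots,S_n\}$ be a homothetic packing of $n$ squares with contact graph $G=([n],E)$. Then every clique of $G$ has at most $4$ vertices, and for every clique $\{i,j,k,\ell\}$ of size $4$ the squares $S_i,S_j,S_k,S_\ell$ share a corner.
   Context: Let $S=\{(x,y): -1\le x,y\le 1\}$. A homothetic packing of $n$ squares is a set $P=\{S_1,\ldots,S_n\}$ with $S_i=r_iS+p_i$, $r_i>0$, $p_i\in\mathbb{R}^2$, such that distinct squares have disjoint interiors. Its contact graph is $G=([n],E)$ where $\{i,j\}\in E$ iff $i\ne j$ and $S_i\cap S_j\ne\emptyset$. Four squares of the packing share a corner if they have a common point $z$ which is a corner (vertex) of each of the four squares (equivalently, they all meet at a single common point, each occupying one of the four quadrants around it). *)

(* Defs.v *)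
From Stdlib Require Import Reals List.
Open Scope R_scope.

(* A square r*S + p with S = [-1,1]^2, given by center p = (cx,cy) and r = rad. *)
Record square := mkSquare { cx : R; cy : R; rad : R }.

Definition in_sq (S : square) (z : R * R) : Prop :=
  Rabs (fst z - cx S) <= rad S /\ Rabs (snd z - cy S) <= rad S.

Definition in_int (S : square) (z : R * R) : Prop :=
  Rabs (fst z - cx S) < rad S /\ Rabs (snd z - cy S) < rad S.

Definition is_corner (S : square) (z : R * R) : Prop :=
  Rabs (fst z - cx S) = rad S /\ Rabs (snd z - cy S) = rad S.

Definition homothetic_packing (n : nat) (P : nat -> square) : Prop :=
  (forall i, (i < n)%nat -> 0 < rad (P i)) /\
  (forall i j, (i < n)%nat -> (j < n)%nat -> i <> j ->
     ~ (exists z, in_int (P i) z /\ in_int (P j) z)).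

Definition contact_edge (P : nat -> square) (i j : nat) : Prop :=
  i <> j /\ exists z, in_sq (P i) z /\ in_sq (P j) z.

Definition is_clique (n : nat) (P : nat -> square) (C : list nat) : Prop :=
  NoDup C /\ (forall i, In i C -> (i < n)%nat) /\
  (forall i j, In i C -> In j C -> i <> j -> contact_edge P i j).

Definition share_corner (P : nat -> square) (C : list nat) : Prop :=
  exists z, forall i, In i C -> is_corner (P i) z.

(* Main.v *)
Require Import Defs.
From Stdlib Require Import Reals List.
From Stdlib Require Import Lra Lia Classical.
Open Scope R_scope.

Lemma abs_le_iff (u r : R) : Rabs u <= r <-> -r <= u <= r.
Proof. unfold Rabs; destruct (Rcase_abs u); split; intros; lra. Qed.

Lemma abs_lt_iff (u r : R) : Rabs u < r <-> -r < u < r.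
Proof. unfold Rabs; destruct (Rcase_abs u); split; intros; lra. Qed.

Lemma max_exists (f : nat -> R) (h : nat) (t : list nat) :
  exists k, In k (h :: t) /\ forall i, In i (h :: t) -> f i <= f k.
Proof.
  revert h. induction t as [|a t IH]; intros h.
  - exists h. split; [left; auto|]. intros i [->|[]]; lra.
  - destruct (IH a) as [k [Hk Hm]].
    destruct (Rle_dec (f h) (f k)).
    + exists k. split; [right; exact Hk|]. intros i [->|Hi]; [lra|auto].
    + exists h. split; [left; auto|]. intros i [->|Hi]; [lra|].
      specialize (Hm i Hi). lra.
Qed.

Definition own (S : square) (z : R * R) (s : bool * bool) : Prop :=
  (if fst s then fst z < cx S + rad S else cx S - rad S < fst z) /\
  (if snd s then snd z < cy S + rad S else cy S - rad S < snd z).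

Lemma one_dim (s : bool) (x a1 b1 a2 b2 : R) :
  a1 <= x <= b1 -> a2 <= x <= b2 ->
  (if s then x < b1 else a1 < x) -> (if s then x < b2 else a2 < x) ->
  exists x', a1 < x' < b1 /\ a2 < x' < b2.
Proof.
  intros H1 H2 H3 H4. destruct s.
  - destruct (Rle_dec b1 b2).
    + exists ((x + b1)/2). lra.
    + exists ((x + b2)/2). lra.
  - destruct (Rle_dec a1 a2).
    + exists ((x + a2)/2). lra.
    + exists ((x + a1)/2). lra.
Qed.

Lemma own_same S1 S2 z s :
  in_sq S1 z -> in_sq S2 z -> own S1 z s -> own S2 z s ->
  exists w, Defs.in_int S1 w /\ Defs.in_int S2 w.
Proof.
  unfold in_sq, own, Defs.in_int. intros [A1 B1] [A2 B2] [C1 D1] [C2 D2].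
  apply abs_le_iff in A1, B1, A2, B2.
  destruct (one_dim (fst s) (fst z) (cx S1 - rad S1) (cx S1 + rad S1)
     (cx S2 - rad S2) (cx S2 + rad S2)) as [x' Hx]; try lra; auto.
  destruct (one_dim (snd s) (snd z) (cy S1 - rad S1) (cy S1 + rad S1)
     (cy S2 - rad S2) (cy S2 + rad S2)) as [y' Hy]; try lra; auto.
  exists (x', y'); simpl; repeat split; apply abs_lt_iff; lra.
Qed.

Definition sel (S : square) (z : R * R) : bool * bool :=
  ((if Rlt_dec (fst z) (cx S + rad S) then true else false),
   (if Rlt_dec (snd z) (cy S + rad S) then true else false)).

Lemma own_sel S z : 0 < rad S -> in_sq S z -> own S z (sel S z).
Proof.
  unfold in_sq, own, sel. intros Hr [A B]. apply abs_le_iff in A, B.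
  simpl. split.
  - destruct (Rlt_dec (fst z) (cx S + rad S)); lra.
  - destruct (Rlt_dec (snd z) (cy S + rad S)); lra.
Qed.

Lemma other_own S z : 0 < rad S -> in_sq S z -> ~ is_corner S z ->
  exists s, s <> sel S z /\ own S z s.
Proof.
  intros Hr Hin Hnc. pose proof (own_sel S z Hr Hin) as Ho.
  unfold in_sq, is_corner in *. destruct Hin as [A B].
  assert (Hx : Rabs (fst z - cx S) <> rad S \/ Rabs (snd z - cy S) <> rad S).
  { destruct (Req_dec (Rabs (fst z - cx S)) (rad S)); [|left; auto].
    destruct (Req_dec (Rabs (snd z - cy S)) (rad S)); [|right; auto].
    exfalso; auto. }
  apply abs_le_iff in A, B.
  destruct Hx as [Hx|Hx].
  - assert (Hs : cx S - rad S < fst z < cx S + rad S).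
    { split; apply Rnot_le_lt; intro; apply Hx; unfold Rabs;
      destruct (Rcase_abs (fst z - cx S)); lra. }
    exists (negb (fst (sel S z)), snd (sel S z)). split.
    + destruct (sel S z) as [a b]; simpl; intro E; injection E;
      destruct a; discriminate.
    + unfold own in *; simpl in *. destruct Ho as [_ Ho]. split; auto.
      destruct (negb _); lra.
  - assert (Hs : cy S - rad S < snd z < cy S + rad S).
    { split; apply Rnot_le_lt; intro; apply Hx; unfold Rabs;
      destruct (Rcase_abs (snd z - cy S)); lra. }
    exists (fst (sel S z), negb (snd (sel S z))). split.
    + destruct (sel S z) as [a b]; simpl; intro E; injection E;
      destruct b; discriminate.
    + unfold own in *; simpl in *. destruct Ho as [Ho _]. split; auto.
      destruct (negb _); lra.
Qed.

Definition all4 : list (bool * bool) :=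
  (true,true) :: (true,false) :: (false,true) :: (false,false) :: nil.

Lemma in_all4 s : In s all4.
Proof. destruct s as [[|] [|]]; simpl; tauto. Qed.

Theorem lemma9 (n : nat) (P : nat -> square) :
  homothetic_packing n P ->
  forall C : list nat, is_clique n P C ->
    (length C <= 4)%nat /\ (length C = 4%nat -> share_corner P C).
Proof.
  intros [Hpos Hdisj] C [Hnd [Hlt Hcl]].
  destruct C as [|h t].
  { split; simpl; [lia|discriminate]. }
  set (C := h :: t) in *.
  destruct (max_exists (fun i => cx (P i) - rad (P i)) h t) as [k [Hk Hmk]].
  destruct (max_exists (fun i => cy (P i) - rad (P i)) h t) as [k' [Hk' Hmk']].
  set (z := (cx (P k) - rad (P k), cy (P k') - rad (P k'))).
  assert (Hin : forall i, In i C -> in_sq (P i) z).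
  { intros i Hi. unfold in_sq, z; simpl.
    specialize (Hmk i Hi); specialize (Hmk' i Hi); simpl in Hmk, Hmk'.
    pose proof (Hpos i (Hlt i Hi)).
    split; apply abs_le_iff; split; try lra.
    - destruct (Nat.eq_dec k i) as [->|Hne]; [lra|].
      destruct (Hcl k i Hk Hi Hne) as [_ [w [[A1 _] [A2 _]]]].
      apply abs_le_iff in A1, A2. lra.
    - destruct (Nat.eq_dec k' i) as [->|Hne]; [lra|].
      destruct (Hcl k' i Hk' Hi Hne) as [_ [w [[_ A1] [_ A2]]]].
      apply abs_le_iff in A1, A2. lra. }
  set (q := fun i => sel (P i) z).
  assert (Hown : forall i, In i C -> own (P i) z (q i)).
  { intros i Hi. apply own_sel; auto. }
  assert (Hinj : forall i j, In i C -> In j C -> q i = q j -> i = j).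
  { intros i j Hi Hj E. destruct (Nat.eq_dec i j) as [|Hne]; auto.
    exfalso. apply (Hdisj i j (Hlt i Hi) (Hlt j Hj) Hne).
    apply (own_same _ _ z (q i)); auto. rewrite E; auto. }
  assert (Hnd' : NoDup (map q C)).
  { apply NoDup_map_NoDup_ForallPairs; [intros a b; apply Hinj | exact Hnd]. }
  assert (Hincl : incl (map q C) all4).
  { intros s _; apply in_all4. }
  pose proof (NoDup_incl_length Hnd' Hincl) as Hlen.
  rewrite length_map in Hlen. simpl in Hlen.
  split; [exact Hlen|].
  intros H4. exists z. intros i Hi.
  apply NNPP; intro Hnc.
  destruct (other_own (P i) z (Hpos i (Hlt i Hi)) (Hin i Hi) Hnc) as [s [Hs Hos]].
  assert (Hall : incl all4 (map q C)).
  { apply (NoDup_length_incl Hnd'); [rewrite length_map, H4; simpl; lia | exact Hincl]. }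
  destruct (proj1 (in_map_iff q C s) (Hall s (in_all4 s))) as [j [Ej Hj]].
  assert (Hne : i <> j).
  { intro; subst j. apply Hs. rewrite <- Ej. reflexivity. }
  apply (Hdisj i j (Hlt i Hi) (Hlt j Hj) Hne).
  apply (own_same _ _ z s); auto. rewrite <- Ej. apply Hown; auto.
Qed.
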